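(* Let $h,r>0$ with $\frac hr\le\omega$. Then on $[-h,h]$, $$\frac{d}{dx}\left(\frac{1}{\rho_0}\,f'(\rho_0')\right)\ge0,$$ where $f'(t)=\frac{t(t^2+2)}{(1+t^2)^{3/2}}$ (the derivative of $f(t)=t^2/\sqrt{1+t^2}$).
   Context: Let $\Xi$ be the unique positive solution of $\xi\tanh\frac1\xi+\mathrm{sech}^2\frac1\xi=\xi$, and $\omega=\frac{1}{\Xi\cosh(1/\Xi)}$. Under $h/r\le\omega$, let $\Pi_0>0$ be the largest solution of $r=\Pi\cosh\frac{h}{\Pi}$ and $\rho_0(x)=\Pi_0\cosh\frac{x}{\Pi_0}$ on $[-h,h]$. *)

(* Defs.v *)
From Stdlib Require Import Reals.
From Coquelicot Require Import Coquelicot.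
Open Scope R_scope.

Definition sech (y : R) : R := / cosh y.

Definition is_Xi (xi : R) : Prop :=
  0 < xi /\ xi * tanh (/ xi) + (sech (/ xi))^2 = xi.

Definition omega_of (xi : R) : R := / (xi * cosh (/ xi)).

Definition is_Pi0 (h r P0 : R) : Prop :=
  0 < P0 /\ r = P0 * cosh (h / P0) /\
  (forall P, 0 < P -> r = P * cosh (h / P) -> P <= P0).

Definition rho0 (P0 : R) (x : R) : R := P0 * cosh (x / P0).

Definition f (t : R) : R := t ^ 2 / sqrt (1 + t ^ 2).
Definition fprime (t : R) : R := t * (t ^ 2 + 2) / (sqrt (1 + t ^ 2)) ^ 3.

(* Main.v *)
Require Import Defs.
From Stdlib Require Import Reals Lra Psatz.
From Coquelicot Require Import Coquelicot.
Open Scope R_scope.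

Lemma Xi_eq (Xi : R) : is_Xi Xi ->
  exp (/ Xi) * exp (/ Xi) * (2 - Xi) = Xi.
Proof.
  intros [HX H]. unfold tanh, sech, sinh, cosh in H. rewrite exp_Ropp in H.
  set (E := exp (/ Xi)) in *. assert (HE : 0 < E) by apply exp_pos.
  assert (Hd : E * E + 1 > 0) by nra.
  replace ((E - / E) / 2 / ((E + / E) / 2)) with ((E*E-1)/(E*E+1)) in H by (field; lra).
  replace (/ ((E + / E) / 2)) with (2*E/(E*E+1)) in H by (field; lra).
  apply (Rmult_eq_compat_r ((E*E+1)^2)) in H.
  replace ((Xi * ((E * E - 1) / (E * E + 1)) + (2 * E / (E * E + 1)) ^ 2) * (E * E + 1) ^ 2)
    with (Xi * (E*E-1)*(E*E+1) + 4*E*E) in H by (field; lra).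
  nra.
Qed.

Lemma cosh_mono (u a : R) : Rabs u <= a -> cosh u <= cosh a.
Proof.
  intros H. assert (Hc : cosh u = cosh (Rabs u)).
  { unfold Rabs; destruct (Rcase_abs u); unfold cosh; [rewrite Ropp_involutive|]; lra. }
  rewrite Hc. set (t := Rabs u) in *. assert (0 <= t) by (apply Rabs_pos).
  unfold cosh. rewrite !exp_Ropp.
  assert (1 <= exp t). { destruct (Req_dec t 0). rewrite H1, exp_0; lra. pose proof (exp_ineq1_le t); lra. }
  assert (exp t <= exp a). { destruct (Req_dec t a). rewrite H2; lra. left; apply exp_increasing; lra. }
  set (X := exp t) in *. set (Y := exp a) in *.
  assert (Y + / Y - (X + / X) = (Y - X) * (X * Y - 1) / (X * Y)) by (field; lra).
  assert (0 <= (Y - X) * (X * Y - 1) / (X * Y)).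
  { apply Rmult_le_pos. apply Rmult_le_pos; nra. left; apply Rinv_0_lt_compat; nra. }
  lra.
Qed.

Lemma cosh_Xi_bound (Xi : R) : is_Xi Xi -> cosh (/ Xi) ^ 2 <= 155/100.
Proof.
  intros HXi. pose proof (Xi_eq Xi HXi) as H. destruct HXi as [HX _].
  set (a := / Xi) in *. assert (Ha : 0 < a) by (apply Rinv_0_lt_compat; lra).
  assert (Hy : exp (2 * a) = exp a * exp a) by (replace (2*a) with (a + a) by ring; apply exp_plus).
  set (E := exp a) in *. assert (HE : 0 < E) by apply exp_pos.
  set (y := E * E) in *. assert (Hy0 : 0 < y) by (unfold y; nra).
  assert (Hw : y * (2 * a - 1) = 1).
  { unfold a. apply (Rmult_eq_reg_r Xi); [|lra]. rewrite Rmult_1_l. transitivity (y*(2-Xi)); [field; lra | exact H]. }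
  set (w := 2 * a - 1) in *.
  assert (Hw0 : w = / y) by (apply (Rmult_eq_reg_l y); [rewrite Rinv_r; lra | lra]).
  assert (Hwp : 0 < w) by (rewrite Hw0; apply Rinv_0_lt_compat; lra).
  assert (Hy1 : 1 < y). { rewrite <- Hy. rewrite <- exp_0. apply exp_increasing. lra. }
  assert (Hw1 : w < 1) by nra.
  assert (Hew : exp (- w) = exp 1 * w).
  { replace (- w) with (1 + - (2 * a)) by (unfold w; ring). rewrite exp_plus, exp_Ropp, Hy.
    rewrite Hw0; reflexivity. }
  assert (Hh : exp (- w) = exp (- w / 2) * exp (- w / 2)) by (rewrite <- exp_plus; f_equal; field).
  assert (Hb : 1 + (- w / 2) <= exp (- w / 2)) by apply exp_ineq1_le.
  pose proof exp_le_3.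
  assert (Hq : (1 - w/2) ^ 2 <= 3 * w) by nra.
  assert (Hc : cosh a ^ 2 = (1 + w) ^ 2 / (4 * w)).
  { unfold cosh. rewrite exp_Ropp. fold E. rewrite Hw0. unfold y. field. lra. }
  rewrite Hc. apply (Rmult_le_reg_r (4 * w)); [lra|]. unfold Rdiv. rewrite Rmult_assoc, Rinv_l; [|lra].
  nra.
Qed.
Lemma cosh_pos' x : 0 < cosh x.
Proof. unfold cosh. pose proof (exp_pos x); pose proof (exp_pos (-x)). lra. Qed.

Lemma Pi0_bound (h r Xi P0 : R) : 0 < h -> 0 < r -> 0 < Xi ->
  h / r <= omega_of Xi -> is_Pi0 h r P0 -> h / P0 <= / Xi.
Proof.
  intros Hh Hr HX Hom [HP [Hreq Hmax]].
  set (a := / Xi). assert (Ha : 0 < a) by (apply Rinv_0_lt_compat; lra).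
  set (k := fun u => u / cosh u - h / r).
  assert (Hd : forall u, ex_derive k u).
  { intro u. unfold k, cosh. auto_derive. pose proof (exp_pos u); pose proof (exp_pos (-u)). lra. }
  assert (Hcont : continuity k).
  { intro u. destruct (Hd u) as [l Hl]. apply derivable_continuous_pt. exists l.
    apply is_derive_Reals. exact Hl. }
  assert (Hk0 : k 0 < 0).
  { unfold k. unfold Rdiv at 1. rewrite Rmult_0_l. assert (0 < h / r) by (apply Rdiv_lt_0_compat; lra). lra. }
  assert (Hka : 0 <= k a).
  { unfold k. unfold omega_of in Hom. fold a.
    replace (a / cosh a) with (/ (Xi * cosh a)).
    - unfold a in *. lra.
    - unfold a. pose proof (cosh_pos' (/Xi)). field. lra. }
  destruct (IVT_cor k 0 a Hcont ltac:(lra) ltac:(nra)) as [z [Hz Hkz]].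
  assert (Hz0 : 0 < z). { assert (z <> 0) by (intro E; rewrite E in Hkz; lra). lra. }
  pose proof (cosh_pos' z).
  assert (HP' : r = (h / z) * cosh (h / (h / z))).
  { replace (h / (h / z)) with z by (field; lra). unfold k in Hkz.
    assert (z / cosh z = h / r) by lra.
    apply (Rmult_eq_reg_r (z / (r * cosh z))).
    - transitivity (z / cosh z). field; lra. rewrite H0. field. lra.
    - apply Rgt_not_eq. apply Rdiv_lt_0_compat; nra. }
  assert (Hle := Hmax (h / z) ltac:(apply Rdiv_lt_0_compat; lra) HP').
  assert (h / P0 <= z).
  { apply (Rmult_le_reg_r P0); [lra|]. replace (h / P0 * P0) with h by (field; lra).
    apply (Rmult_le_compat_l z) in Hle; [|lra]. replace (z * (h / z)) with h in Hle by (field; lra). lra. }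
  change (/Xi) with a. lra.
Qed.
Lemma Derive_rho0 P y : 0 < P -> Derive (rho0 P) y = sinh (y / P).
Proof.
  intros HP. apply is_derive_unique. unfold rho0, cosh, sinh.
  auto_derive. auto. unfold Rdiv. field. lra.
Qed.

Definition G P y := sinh (y/P) * (cosh (y/P)^2 + 1) / (P * cosh (y/P)^4).

Lemma funeq P y : 0 < P -> / rho0 P y * fprime (Derive (rho0 P) y) = G P y.
Proof.
  intros HP. rewrite Derive_rho0 by auto. unfold fprime, G, rho0.
  pose proof (cosh_pos' (y/P)).
  assert (Hs : sqrt (1 + sinh (y/P) ^ 2) = cosh (y/P)).
  { replace (1 + sinh (y/P) ^ 2) with (cosh (y/P) ^ 2).
    - apply sqrt_pow2; lra.
    - unfold cosh, sinh. rewrite exp_Ropp. pose proof (exp_pos (y/P)). field. lra. }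
  rewrite Hs.
  replace (sinh (y/P) ^ 2) with (cosh (y/P) ^ 2 - 1).
  - field. lra.
  - unfold cosh, sinh. rewrite exp_Ropp. pose proof (exp_pos (y/P)). field. lra.
Qed.

Lemma derive_G P y : 0 < P ->
  is_derive (G P) y ((4 - cosh (y/P)^2 - cosh (y/P)^4) / (P^2 * cosh (y/P)^5)).
Proof.
  intros HP. unfold G, cosh, sinh.
  pose proof (exp_pos (y/P)). pose proof (exp_pos (-(y/P))).
  auto_derive; unfold Rdiv in *; rewrite ?exp_Ropp in *; set (E := exp (y * / P)) in *;
  assert (0 < / E) by (apply Rinv_0_lt_compat; lra);
  assert (Hc : 0 < (E + / E) * / 2) by lra.
  - apply Rgt_not_eq. repeat apply Rmult_lt_0_compat; lra.
  - field. split; [lra|]. split; [|lra]. nra.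
Qed.

Theorem lemma4p3 (h r Xi P0 : R) :
  0 < h -> 0 < r ->
  is_Xi Xi ->
  h / r <= omega_of Xi ->
  is_Pi0 h r P0 ->
  forall x, -h <= x <= h ->
    ex_derive (fun y => / rho0 P0 y * fprime (Derive (rho0 P0) y)) x /\
    0 <= Derive (fun y => / rho0 P0 y * fprime (Derive (rho0 P0) y)) x.
Proof.
  intros Hh Hr HXi Hom HPi x Hx.
  assert (HP : 0 < P0) by (destruct HPi; lra).
  assert (HX : 0 < Xi) by (destruct HXi; lra).
  assert (Hb := Pi0_bound h r Xi P0 Hh Hr HX Hom HPi).
  assert (Hext : forall y, G P0 y = / rho0 P0 y * fprime (Derive (rho0 P0) y))
    by (intro y; symmetry; apply funeq; exact HP).
  pose proof (derive_G P0 x HP) as HD.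
  split.
  - eapply ex_derive_ext. exact Hext. eexists; exact HD.
  - erewrite <- Derive_ext by exact Hext. rewrite (is_derive_unique _ _ _ HD).
    set (c := cosh (x / P0)).
    assert (Hc : 0 < c) by apply cosh_pos'.
    assert (Hca : c <= cosh (/ Xi)).
    { apply cosh_mono. apply Rabs_le. split.
      - apply (Rmult_le_reg_r P0); [lra|]. replace (x / P0 * P0) with x by (field; lra).
        assert (h <= / Xi * P0).
        { apply (Rmult_le_compat_r P0) in Hb; [|lra]. replace (h / P0 * P0) with h in Hb by (field; lra). lra. }
        lra.
      - apply (Rmult_le_reg_r P0); [lra|]. replace (x / P0 * P0) with x by (field; lra).
        apply (Rmult_le_compat_r P0) in Hb; [|lra]. replace (h / P0 * P0) with h in Hb by (field; lra). lra. }
    pose proof (cosh_Xi_bound Xi HXi) as Hq.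
    assert (Hc2 : c ^ 2 <= 155/100) by nra.
    apply Rmult_le_pos.
    + nra.
    + left. apply Rinv_0_lt_compat. apply Rmult_lt_0_compat; apply pow_lt; lra.
Qed.
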